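(* Let $N\in\mathbb{N}$, $0\le\mu<L<\infty$, and let $M$ be a method which, for coefficients $\{\alpha_{i,j}\}_{i=1,\dots,N;\,j=0,\dots,i-1}$, generates iterates satisfying $w_k-w_\star=(w_0-w_\star)(1-\frac{\mu}{L}\sum_{i=0}^{k-1}\alpha_{k,i})-\sum_{i=0}^{k-1}\frac{\alpha_{k,i}}{L}\nabla\tilde f(w_i)$, $k=1,\dots,N$, where $\tilde f(x)=f(x)-\frac\mu2\|x-w_\star\|^2$. For any $d\in\mathbb{N}$, $f\in\mathcal{F}_{\mu,L}(\mathbb{R}^d)$, $w_\star\in\arg\min_w f(w)$, initial point $w_0\in\mathbb{R}^d$, and $w_N$ the output of $M$ on $f$ from $w_0$, it holds that $\|w_N-w_\star\|^2\le \mathrm{val}(R)\,\|w_0-w_\star\|^2$, where $\mathrm{val}(R)$ is the optimal value of problem (R) described in the context.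
   Context: $\mathcal{F}_{\mu,L}(\mathbb{R}^d)$ denotes the set of proper closed convex functions $f:\mathbb{R}^d\to\mathbb{R}$ such that for all $x,y$: $f(x)\le f(y)+\langle\nabla f(y);x-y\rangle+\frac L2\|x-y\|^2$ and $f(x)\ge f(y)+\langle\nabla f(y);x-y\rangle+\frac\mu2\|x-y\|^2$. Problem (R): maximize $\|w_N-w_\star\|^2$ over $d\in\mathbb{N}$ and triples $(w_i,g_i,f_i)\in\mathbb{R}^d\times\mathbb{R}^d\times\mathbb{R}$, $i\in\{\star,0,\dots,N\}$, subject to: $\|w_0-w_\star\|^2=1$, $g_\star=0$; $w_k=w_\star+(w_0-w_\star)(1-\frac{\mu}{L}\sum_{i=0}^{k-1}\alpha_{k,i})-\sum_{i=0}^{k-1}\frac{\alpha_{k,i}}{L}g_i$ for $k=1,\dots,N$; $f_i\ge f_{i+1}+\langle g_{i+1};w_i-w_{i+1}\rangle+\frac{1}{2(L-\mu)}\|g_i-g_{i+1}\|^2$ for $i=0,\dots,N-2$; $f_\star\ge f_i+\langle g_i;w_\star-w_i\rangle+\frac{1}{2(L-\mu)}\|g_i\|^2$ for $i=0,\dots,N-1$; and $f_{N-1}\ge f_\star+\frac{1}{2(L-\mu)}\|g_{N-1}\|^2$. *)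

(* Defs.v *)
From HB Require Import structures.
From mathcomp Require Import all_boot all_order all_algebra.
From mathcomp Require Import all_classical all_reals all_analysis.
Set Implicit Arguments. Unset Strict Implicit. Unset Printing Implicit Defensive.
Import Order.TTheory GRing.Theory Num.Theory.
Import numFieldNormedType.Exports.
Local Open Scope classical_set_scope.
Local Open Scope ring_scope.

Definition dotv (R : pzRingType) (d : nat) (x y : 'rV[R]_d) : R :=
  \sum_(i < d) x 0 i * y 0 i.
Definition sqn (R : pzRingType) (d : nat) (x : 'rV[R]_d) : R := dotv x x.

Definition in_FmuL (R : realType) (d : nat) (mu L : R)
    (f : 'rV[R]_d -> R) (gf : 'rV[R]_d -> 'rV[R]_d) : Prop :=
  (forall x, differentiable f x /\ forall h, 'd f x h = dotv (gf x) h) /\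
  (forall x y (t : R), 0 <= t <= 1 ->
      f (t *: x + (1 - t) *: y) <= t * f x + (1 - t) * f y) /\
  (forall x y, f x <= f y + dotv (gf y) (x - y) + L / 2 * sqn (x - y)) /\
  (forall x y, f x >= f y + dotv (gf y) (x - y) + mu / 2 * sqn (x - y)).

(* Iterates generated by the method M with coefficients alpha (alpha k i,
   k = 1..N, i = 0..k-1), written in terms of the gradient of
   f~(x) = f(x) - mu/2 ||x - ws||^2, i.e. grad f~(x) = gf x - mu (x - ws). *)
Definition method_iterates (R : realType) (d N : nat) (mu L : R)
    (alpha : nat -> nat -> R) (gf : 'rV[R]_d -> 'rV[R]_d) (ws : 'rV[R]_d)
    (w : nat -> 'rV[R]_d) : Prop :=
  forall k, (1 <= k <= N)%N ->
    w k - ws = (1 - mu / L * \sum_(i < k) alpha k i) *: (w 0%N - ws)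
               - \sum_(i < k) (alpha k i / L) *: (gf (w i) - mu *: (w i - ws)).

Definition R_feasible (R : realType) (N : nat) (mu L : R)
    (alpha : nat -> nat -> R) (v : R) : Prop :=
  exists (d : nat) (ws gs : 'rV[R]_d) (fs : R)
         (w g : nat -> 'rV[R]_d) (fv : nat -> R),
    sqn (w 0%N - ws) = 1 /\ gs = 0 /\
        (forall k, (1 <= k <= N)%N ->
           w k = ws + (1 - mu / L * \sum_(i < k) alpha k i) *: (w 0%N - ws)
                 - \sum_(i < k) (alpha k i / L) *: g i) /\
        (forall i, (i.+2 <= N)%N ->
           fv i >= fv i.+1 + dotv (g i.+1) (w i - w i.+1)
                   + 1 / (2 * (L - mu)) * sqn (g i - g i.+1)) /\
        (forall i, (i < N)%N ->
           fs >= fv i + dotv (g i) (ws - w i) + 1 / (2 * (L - mu)) * sqn (g i)) /\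
        fv N.-1 >= fs + 1 / (2 * (L - mu)) * sqn (g N.-1) /\
    v = sqn (w N - ws).

Definition val_R (R : realType) (N : nat) (mu L : R) (alpha : nat -> nat -> R)
  : \bar R :=
  ereal_sup (EFin @` [set v | R_feasible N mu L alpha v]).

(* Main.v *)
Require Import Defs.
From HB Require Import structures.
From mathcomp Require Import all_boot all_order all_algebra.
From mathcomp Require Import all_classical all_reals all_analysis.
From mathcomp Require Import lra ring.
Import Order.TTheory GRing.Theory Num.Theory.
Import numFieldNormedType.Exports.
Local Open Scope classical_set_scope.
Local Open Scope ring_scope.

Set Implicit Arguments.
Section H.
Context {R : realType}.
Context {d : nat}.
Implicit Types x y z : 'rV[R]_d.

Lemma dotvDl x y z : dotv (x + y) z = dotv x z + dotv y z.
Proof. rewrite /dotv -big_split /=; apply: eq_bigr => i _; by rewrite mxE mulrDl. Qed.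
Lemma dotvZl (a : R) x y : dotv (a *: x) y = a * dotv x y.
Proof. rewrite /dotv mulr_sumr; apply: eq_bigr => i _; by rewrite mxE mulrA. Qed.
Lemma dotvNl x y : dotv (- x) y = - dotv x y.
Proof. rewrite /dotv -sumrN; apply: eq_bigr => i _; by rewrite mxE mulNr. Qed.
Lemma dotvC x y : dotv x y = dotv y x.
Proof. rewrite /dotv; apply: eq_bigr => i _; by rewrite mulrC. Qed.
Lemma dotvDr x y z : dotv z (x + y) = dotv z x + dotv z y.
Proof. by rewrite dotvC dotvDl !(dotvC z). Qed.
Lemma dotvZr (a : R) x y : dotv y (a *: x) = a * dotv y x.
Proof. by rewrite dotvC dotvZl (dotvC y). Qed.
Lemma dotvNr x y : dotv y (- x) = - dotv y x.
Proof. by rewrite dotvC dotvNl (dotvC y). Qed.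
Lemma dotv0l y : dotv 0 y = 0.
Proof. by rewrite /dotv big1 // => i _; rewrite mxE mul0r. Qed.
Lemma sqnZ (a : R) x : sqn (a *: x) = a ^+ 2 * sqn x.
Proof. by rewrite /sqn dotvZl dotvZr mulrA expr2. Qed.
Lemma sqn_ge0 x : 0 <= sqn x.
Proof. by apply: sumr_ge0 => i _; rewrite -expr2 sqr_ge0. Qed.
Lemma sqn_eq0 x : sqn x = 0 -> x = 0.
Proof.
move=> H0.
have H := psumr_eq0P (fun i _ => sqr_ge0 (x 0 i)).
apply/rowP => j; rewrite mxE.
have : x 0 j ^+ 2 == 0.
  have E : \sum_(i < d) x 0 i ^+ 2 = 0.
    rewrite (eq_bigr (fun i => x 0 i * x 0 i)); first exact: H0.
    by move=> i _; rewrite expr2.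
  by apply/eqP; exact: (H xpredT E j isT).
by rewrite sqrf_eq0 => /eqP.
Qed.
End H.

Set Implicit Arguments. Unset Strict Implicit.

Lemma interp_gen (R : realType) d (h : 'rV[R]_d -> R) (G : 'rV[R]_d -> 'rV[R]_d)
  (Lp : R) (hL : 0 < Lp)
  (hA : forall x y, h y + dotv (G y) (x - y) <= h x)
  (hB : forall x y, h x <= h y + dotv (G y) (x - y) + Lp / 2 * sqn (x - y)) :
  forall x y, h y + dotv (G y) (x - y) + 1 / (2 * Lp) * sqn (G x - G y) <= h x.
Proof.
move=> x y.
set u := G x - G y; set k := Lp^-1.
set z := x + (- k) *: u.
have e1 : z - y = (x - y) + (- k) *: u by rewrite /z addrAC.
have e2 : z - x = (- k) *: u by rewrite /z addrC addKr.
have A := hA z y; have B := hB z x.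
rewrite e1 dotvDr dotvZr in A.
rewrite e2 dotvZr sqnZ in B.
have hP : dotv (G x) u - dotv (G y) u = sqn u by rewrite /sqn /u dotvDl dotvNl.
have hk1 : Lp / 2 * ((- k) ^+ 2 * sqn u) = k / 2 * sqn u.
  rewrite /k; field; lra.
have hk2 : 1 / (2 * Lp) = k / 2 by rewrite /k; field; lra.
have hk3 : k * dotv (G x) u = k * dotv (G y) u + k * sqn u by rewrite -hP; ring.
rewrite hk2; lra.
Qed.

Lemma ftA (R : realType) d (mu L : R) f gf ws (hf : @in_FmuL R d mu L f gf) :
  forall x y, (fun x => f x - mu / 2 * sqn (x - ws)) y
     + dotv ((fun x => gf x - mu *: (x - ws)) y) (x - y)
     <= (fun x => f x - mu / 2 * sqn (x - ws)) x.
Proof.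
move=> x y /=.
have H := hf.2.2.2 x y.
move: H; rewrite /sqn !(dotvDl, dotvDr, dotvNl, dotvNr, dotvZl, dotvZr).
rewrite (dotvC y x) (dotvC ws x) (dotvC ws y).
move=> H; nra.
Qed.

Lemma ftB (R : realType) d (mu L : R) f gf ws (hf : @in_FmuL R d mu L f gf) :
  forall x y, (fun x => f x - mu / 2 * sqn (x - ws)) x <=
     (fun x => f x - mu / 2 * sqn (x - ws)) y
     + dotv ((fun x => gf x - mu *: (x - ws)) y) (x - y) + (L - mu) / 2 * sqn (x - y).
Proof.
move=> x y /=.
have H := hf.2.2.1 x y.
move: H; rewrite /sqn !(dotvDl, dotvDr, dotvNl, dotvNr, dotvZl, dotvZr).
rewrite (dotvC y x) (dotvC ws x) (dotvC ws y).
move=> H; nra.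
Qed.

Unset Implicit Arguments. Set Strict Implicit.

Theorem lemma4 (R : realType) (N : nat) (mu L : R) (alpha : nat -> nat -> R)
  (hmu : 0 <= mu) (hmuL : mu < L)
  (d : nat) (f : 'rV[R]_d -> R) (gf : 'rV[R]_d -> 'rV[R]_d)
  (hf : in_FmuL mu L f gf)
  (ws : 'rV[R]_d) (hws : forall x, f ws <= f x)
  (w : nat -> 'rV[R]_d) (hw : method_iterates N mu L alpha gf ws w) :
  ((sqn (w N - ws))%:E <= val_R N mu L alpha * (sqn (w 0%N - ws))%:E)%E.
Proof.
have hLp : 0 < L - mu by lra.
have hL : 0 < L by lra.
have hI := interp_gen hLp (ftA ws hf) (ftB ws hf).
have hg0 : gf ws = 0.
  have H1 := hf.2.2.1 (ws + (- L^-1) *: gf ws) ws.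
  have H2 := hws (ws + (- L^-1) *: gf ws).
  have ev : ws + (- L^-1) *: gf ws - ws = (- L^-1) *: gf ws by rewrite addrC addKr.
  rewrite ev dotvZr sqnZ in H1.
  have hk : L / 2 * ((- L^-1) ^+ 2 * sqn (gf ws)) = L^-1 / 2 * sqn (gf ws).
    by field; lra.
  rewrite hk in H1.
  have hq := sqn_ge0 (gf ws).
  have hki : 0 < L^-1 by rewrite invr_gt0.
  have : sqn (gf ws) <= 0.
    have : L^-1 * sqn (gf ws) <= 0 by rewrite /sqn in H1 *; lra.
    by rewrite pmulr_rle0.
  move=> hq0; apply: sqn_eq0; apply/eqP; rewrite eq_le hq0 hq //.
have hG0 : gf ws - mu *: (ws - ws) = 0 by rewrite hg0 subrr scaler0 subrr.
have sqn0 : sqn (0 : 'rV[R]_d) = 0 by rewrite /sqn dotv0l.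
have := sqn_ge0 (w 0%N - ws); rewrite le_eqVlt => /orP [/eqP s0 | spos].
- have w0 : w 0%N = ws by apply/eqP; rewrite -subr_eq0; apply/eqP/sqn_eq0.
  have wk : forall k, (k <= N)%N -> w k = ws.
    elim/ltn_ind => -[|k] IH hk //.
    have := hw k.+1 hk.
    rewrite w0 subrr scaler0 sub0r big1 ?oppr0.
      by move/eqP; rewrite subr_eq0 => /eqP.
    move=> i _; rewrite IH ?hG0 ?scaler0 //.
    exact: leq_trans (ltnW (ltn_ord i)) hk.
  rewrite wk // subrr sqn0 -s0 mule0 //.
- set s := sqn (w 0%N - ws) in spos *.
  set c := Num.sqrt s^-1.
  have hc2 : c ^+ 2 = s^-1 by rewrite /c sqr_sqrtr // invr_ge0 ltW.
  have hc0 : 0 <= c ^+ 2 by rewrite sqr_ge0.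
  set ft := fun x => f x - mu / 2 * sqn (x - ws).
  set G := fun x => gf x - mu *: (x - ws).
  have hsub : forall a b : 'rV[R]_d, c *: a - c *: b = c *: (a - b).
    by move=> a b; rewrite scalerBr.
  have hsub2 : forall a b : 'rV[R]_d, (a - ws) - (b - ws) = a - b.
    by move=> a b; rewrite opprB addrA subrK.
  have sqnN : forall a : 'rV[R]_d, sqn (- a) = sqn a.
    by move=> a; rewrite /sqn dotvNl dotvNr opprK.
  have feas : R_feasible N mu L alpha (c ^+ 2 * sqn (w N - ws)).
    exists d, 0, 0, (c ^+ 2 * ft ws), (fun i => c *: (w i - ws)),
      (fun i => c *: G (w i)), (fun i => c ^+ 2 * ft (w i)).
    split; first by rewrite subr0 sqnZ hc2 mulVf // gt_eqF.
    split; first by [].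
    split.
      move=> k hk; rewrite (hw k hk) add0r subr0 scalerBr scalerA mulrC -scalerA.
      congr (_ + (- _)); rewrite scaler_sumr; apply: eq_bigr => i _.
      by rewrite !scalerA [c * _]mulrC.
    split.
      move=> i hi; rewrite hsub hsub2 hsub dotvZl dotvZr sqnZ.
      have := ler_wpM2l hc0 (hI (w i) (w i.+1)).
      rewrite /ft /G /=; nra.
    split.
      move=> i hi.
      have e : (0 : 'rV[R]_d) - c *: (w i - ws) = c *: (ws - w i).
        by rewrite sub0r -scalerN opprB.
      rewrite e dotvZl dotvZr sqnZ.
      have := ler_wpM2l hc0 (hI ws (w i)).
      rewrite /ft /G /= hG0 sub0r sqnN; nra.
    split; last by rewrite subr0 sqnZ.
    rewrite sqnZ.
    have := ler_wpM2l hc0 (hI (w N.-1) ws).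
    rewrite /ft /G /= hG0 dotv0l subr0; nra.
  have hub : ((c ^+ 2 * sqn (w N - ws))%:E <= val_R N mu L alpha)%E.
    by apply: ereal_sup_ubound; exists (c ^+ 2 * sqn (w N - ws)).
  have -> : (sqn (w N - ws))%:E = ((c ^+ 2 * sqn (w N - ws))%:E * s%:E)%E.
    rewrite -EFinM hc2; congr (_%:E); field; by rewrite gt_eqF.
  by apply: lee_wpmul2r => //; rewrite lee_fin ltW.
Qed.
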